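(* Let $M$ be an $m$-dimensional manifold and $C$ a compact subset of $M$. Let $f:\mathbb{R}^n\times M\to\mathbb{R}$ be $C^\infty$, let $x_0\in C$, and define $g:M\to\mathbb{R}$ by $g(x)=f(0,x)$. Assume that $g|_C$ attains an absolute minimum at $x_0$ and that $x_0$ is the only point of $C$ where this minimum is attained; that $g$ has a critical point at $x_0$ with positive definite Hessian there; and that there exists $\zeta>0$ such that for all $p\in\mathbb{R}^n$ with $|p|<\zeta$ the function $M\to\mathbb{R}$, $x\mapsto f(p,x)$, has a critical point at $x_0$. Then there exists $\epsilon>0$ such that for all $p\in\mathbb{R}^n$ with $|p|<\epsilon$, the function $C\to\mathbb{R}$, $x\mapsto f(p,x)$, attains an absolute minimum at $x_0$. *)

(* Defs.v *)
From HB Require Import structures.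
From mathcomp Require Import all_boot all_order all_algebra.
From mathcomp Require Import all_classical all_reals all_analysis.
Set Implicit Arguments. Unset Strict Implicit. Unset Printing Implicit Defensive.
Import Order.TTheory GRing.Theory Num.Theory.
Import numFieldNormedType.Exports.
Local Open Scope classical_set_scope.
Local Open Scope ring_scope.

Fixpoint Ck_on (R : realType) (V W : normedModType R) (k : nat)
    (U : set V) (f : V -> W) : Prop :=
  match k with
  | 0%N => forall x, U x -> {for x, continuous f}
  | k'.+1 => (forall x, U x -> {for x, continuous f}) /\
             forall v : V, (forall x, U x -> derivable f x v) /\
                           Ck_on k' U (fun x => 'D_v f x)
  end.

Definition smooth_on (R : realType) (V W : normedModType R)
    (U : set V) (f : V -> W) : Prop := forall k, Ck_on k U f.

Record chart (R : realType) (M : Type) (m : nat) := Chart {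
  ch_dom : set M;
  ch_fun : M -> 'rV[R]_m;
  ch_inv : 'rV[R]_m -> M;
  ch_img : set 'rV[R]_m }.

Definition is_chart (R : realType) (M : topologicalType) (m : nat)
    (c : chart R M m) : Prop :=
  [/\ open (ch_dom c) /\ open (ch_img c),
      (forall x, ch_dom c x -> ch_img c (ch_fun c x) /\ ch_inv c (ch_fun c x) = x),
      (forall y, ch_img c y -> ch_dom c (ch_inv c y) /\ ch_fun c (ch_inv c y) = y),
      (forall x, ch_dom c x -> {for x, continuous (ch_fun c)}) &
      (forall y, ch_img c y -> {for y, continuous (ch_inv c)})].

Definition smooth_manifold (R : realType) (M : topologicalType) (m : nat)
    (A : set (chart R M m)) : Prop :=
  [/\ hausdorff_space M, @second_countable M,
      (forall c, A c -> is_chart c),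
      (forall x : M, exists c, A c /\ ch_dom c x) &
      (forall c d, A c -> A d ->
         smooth_on [set y | ch_img c y /\ ch_dom d (ch_inv c y)]
                   (fun y => ch_fun d (ch_inv c y)))].

(* f : R^n x M -> R is C^oo (read through charts; the pair (p, y) is
   encoded as the row vector z = (p | y) in 'rV_(n + m)). *)
Definition smooth_param (R : realType) (M : topologicalType) (n m : nat)
    (A : set (chart R M m)) (f : 'rV[R]_n -> M -> R) : Prop :=
  forall c, A c ->
    smooth_on [set z : 'rV[R]_(n + m) | ch_img c (rsubmx z)]
              (fun z => f (lsubmx z) (ch_inv c (rsubmx z))).

Definition critical_point (R : realType) (M : topologicalType) (m : nat)
    (A : set (chart R M m)) (h : M -> R) (x0 : M) : Prop :=
  forall c, A c -> ch_dom c x0 ->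
    forall v : 'rV[R]_m, 'D_v (fun y => h (ch_inv c y)) (ch_fun c x0) = 0.

Definition pos_def_hessian (R : realType) (M : topologicalType) (m : nat)
    (A : set (chart R M m)) (h : M -> R) (x0 : M) : Prop :=
  forall c, A c -> ch_dom c x0 ->
    forall v : 'rV[R]_m, v != 0 ->
      0 < 'D_v (fun y => 'D_v (fun y' => h (ch_inv c y')) y) (ch_fun c x0).

(* Main.v *)
Require Import Defs.
From HB Require Import structures.
From mathcomp Require Import all_boot all_order all_algebra.
From mathcomp Require Import all_classical all_reals all_analysis.
Import Order.TTheory GRing.Theory Num.Theory.
Import numFieldNormedType.Exports.
Local Open Scope classical_set_scope.
Local Open Scope ring_scope.
Section Aux.
Variable R : realType.

Lemma mxnorm_lt p q (x : 'M[R]_(p, q)) e :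
  `|x| < e <-> (0 < e /\ forall i j, `|x i j| < e).
Proof.
have := @mx_norm_ball R p q; move/(congr1 (fun F => F 0 e x)).
rewrite /ball_ /= sub0r normrN => <-.
split; move=> [e0 H]; split => // i j.
  by have := H i j; rewrite /ball /= mxE sub0r normrN.
by rewrite /ball /= mxE sub0r normrN.
Qed.

Lemma mxentry_le p q (x : 'M[R]_(p, q)) i j : `|x i j| <= `|x|.
Proof.
rewrite leNgt; apply/negP => /mxnorm_lt [_ /(_ i j)]; by rewrite ltxx.
Qed.

Lemma norm_row_mx_lt k l (a : 'rV[R]_k) (b : 'rV[R]_l) e :
  `|a| < e -> `|b| < e -> `|row_mx a b| < e.
Proof.
move=> /mxnorm_lt [e0 Ha] /mxnorm_lt [_ Hb]; apply/mxnorm_lt; split => // i j.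
by rewrite mxE; case: splitP => j' _.
Qed.

Lemma derive_line (V : normedModType R) (K : V -> R) w v t :
  'D_1 (fun s : R => K (w + s *: v)) t = 'D_v K (w + t *: v) /\
  (derivable (fun s : R => K (w + s *: v)) t 1 <-> derivable K (w + t *: v) v).
Proof.
have E : (fun h : R => h^-1 *: (((fun s : R => K (w + s *: v)) \o shift t) (h *: 1)
          - K (w + t *: v))) =
         (fun h : R => h^-1 *: ((K \o shift (w + t *: v)) (h *: v) - K (w + t *: v))).
  apply: funext => h /=; congr (_ *: (K _ - _)).
  by rewrite /shift /= scaler1 scalerDl addrCA addrC.
by rewrite /derive /derivable E.
Qed.

Lemma derive_row_mx k l (K : 'rV[R]_(k + l) -> R) (p : 'rV[R]_k) y v :
  'D_(row_mx 0 v) K (row_mx p y) = 'D_v (fun y' => K (row_mx p y')) y /\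
  (derivable K (row_mx p y) (row_mx 0 v) <-> derivable (fun y' => K (row_mx p y')) y v).
Proof.
have E : (fun h : R => h^-1 *: ((K \o shift (row_mx p y)) (h *: row_mx 0 v) - K (row_mx p y))) =
   (fun h : R => h^-1 *: (((fun y' => K (row_mx p y')) \o shift y) (h *: v) - K (row_mx p y))).
  apply: funext => h /=; congr (_ *: (K _ - _)).
  by rewrite /shift /= scale_row_mx scaler0 add_row_mx add0r.
by rewrite /derive /derivable E.
Qed.

End Aux.
From mathcomp Require Import ring lra.
Section Aux2.
Variable R : realType.

Lemma mvt_dir (V : normedModType R) (K : V -> R) w v (h : R) :
  (forall s : R, `|s| <= `|h| -> derivable K (w + s *: v) v) ->
  exists s : R, `|s| <= `|h| /\ K (w + h *: v) - K w = h * 'D_v K (w + s *: v).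
Proof.
move=> Hd; set psi := fun s : R => K (w + s *: v).
have dpsi (s : R) : `|s| <= `|h| -> derivable psi s 1.
  by move=> hs; rewrite /psi; apply/(@derive_line R _ K w v s).2; exact: Hd.
have ispsi (s : R) : `|s| <= `|h| -> is_derive s 1 psi ('D_v K (w + s *: v)).
  by move=> hs; apply: DeriveDef; [exact: dpsi | rewrite /psi; exact: (@derive_line R _ K w v s).1].
have cpsi (s : R) : `|s| <= `|h| -> {for s, continuous psi}.
  by move=> /dpsi/derivable1_diffP/differentiable_continuous.
have psi0 : psi 0 = K w by rewrite /psi scale0r addr0.
case: (leP 0 h) => h0.
- have I1 x : x \in `]0, h[ -> `|x| <= `|h|.
    rewrite in_itv /= => /andP[a b]; rewrite !ger0_norm //; [lra|lra].
  have I2 x : x \in `[0, h] -> `|x| <= `|h|.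
    rewrite in_itv /= => /andP[a b]; rewrite !ger0_norm //.
  have C : {within `[0, h], continuous psi}.
    apply: continuous_in_subspaceT => x; rewrite inE /= => xI; exact: cpsi (I2 x xI).
  have [c cI E] := MVT_segment h0 (fun x xI => ispsi x (I1 x xI)) C.
  exists c; split; first exact: I2.
  by move: E; rewrite psi0 subr0 mulrC.
- have I1 x : x \in `]h, 0[ -> `|x| <= `|h|.
    rewrite in_itv /= => /andP[a b]; rewrite !ltr0_norm //; lra.
  have I2 x : x \in `[h, 0] -> `|x| <= `|h|.
    rewrite in_itv /= => /andP[a b]; rewrite (ltr0_norm h0) ler_norml; apply/andP; split; lra.
  have C : {within `[h, 0], continuous psi}.
    apply: continuous_in_subspaceT => x; rewrite inE /= => xI; exact: cpsi (I2 x xI).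
  have [c cI E] := MVT_segment (ltW h0) (fun x xI => ispsi x (I1 x xI)) C.
  exists c; split; first exact: I2.
  move: E; rewrite psi0 /psi => E.
  have -> : K (w + h *: v) - K w = - (K w - K (w + h *: v)) by ring.
  by rewrite E; ring.
Qed.

End Aux2.
Section Aux3.
Variable R : realType.

Lemma derive_comb (V : normedModType R) (K : V -> R) (U : set V) z u v (a : R) :
  nbhs z U -> (forall y, U y -> forall e, derivable K y e) ->
  {for z, continuous ('D_v K)} ->
  'D_(u + a *: v) K z = 'D_u K z + a * 'D_v K z.
Proof.
move=> NU Hd Hc.
have Uz : U z := nbhs_singleton NU.
set r := fun h : R => h^-1 *: (K (h *: u + z + (h * a) *: v) - K (h *: u + z)).
set qu := fun h : R => h^-1 *: ((K \o shift z) (h *: u) - K z).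
have E : (fun h : R => h^-1 *: ((K \o shift z) (h *: (u + a *: v)) - K z)) = qu + r.
  apply: funext => h; rewrite -[(qu + r) h]/(qu h + r h) /qu /r /= /shift /=.
  have -> : h *: (u + a *: v) + z = h *: u + z + (h * a) *: v.
    by rewrite scalerDr scalerA addrAC.
  by rewrite -scalerDr; congr (_ *: _); ring.
rewrite /derive E; apply: cvg_lim => //; apply: cvgD; first exact: (Hd z Uz u).
apply/cvgrPdist_le => eps eps0.
set eta := eps / (`|a| + 1).
have eta0 : 0 < eta by rewrite divr_gt0 // ltr_pwDr.
have Nz : \forall y \near z, U y /\ `|'D_v K z - 'D_v K y| < eta.
  have Hc' := (cvgrPdist_lt _ _).1 Hc eta eta0.
  by near=> y; split; [near: y; exact: NU | near: y; exact: Hc'].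
have [rho rho0 Hrho] := (nbhs_ballP _ _).1 Nz.
set N := `|u| + `|a| * `|v| + 1.
have N0 : 0 < N by rewrite /N ltr_pwDr // addr_ge0 // mulr_ge0.
near=> h.
have hN0 : h != 0 by near: h; exact: nbhs_dnbhs_neq.
have hs : `|h| < rho / N by near: h; apply: dnbhs0_lt; rewrite divr_gt0.
have hs' : `|h| * N < rho by rewrite -ltr_pdivlMr.
have inball s : `|s| <= `|h * a| -> U (h *: u + z + s *: v) /\
    `|'D_v K z - 'D_v K (h *: u + z + s *: v)| < eta.
  move=> sh; apply: Hrho; rewrite -ball_normE /ball_ /=.
  have -> : z - (h *: u + z + s *: v) = - (h *: u + s *: v).
    by rewrite [h *: u + z]addrC -addrA opprD addrA subrr add0r.
  rewrite normrN (le_lt_trans (ler_normD _ _)) // !normrZ.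
  apply: le_lt_trans hs'.
  rewrite /N mulrDr mulr1 mulrDr -addrA lerD2l.
  apply: (le_trans (ler_wpM2r (normr_ge0 _) sh)).
  rewrite normrM -mulrA ler_wpDr //; exact: mulr_ge0.
have [s [sh Es]] := @mvt_dir R V K (h *: u + z) v (h * a)
   (fun s sh => Hd _ (inball s sh).1 v).
rewrite /r Es /GRing.scale /= mulrA mulKf // -mulrBr normrM.
apply: (le_trans (ler_wpM2l (normr_ge0 _) (ltW (inball s sh).2))).
rewrite /eta mulrA ler_pdivrMr ?ltr_pwDr // mulrC ler_pM2l // lerDl //.
Unshelve. all: by end_near. Qed.
End Aux3.
Section Aux4.
Variable R : realType.

Lemma derive_sumdir (V : normedModType R) (K : V -> R) (U : set V) z k
    (w : 'I_k -> V) (c : 'I_k -> R) :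
  nbhs z U -> (forall y, U y -> forall e, derivable K y e) ->
  (forall i, {for z, continuous ('D_(w i) K)}) ->
  'D_(\sum_i c i *: w i) K z = \sum_i c i * 'D_(w i) K z.
Proof.
move=> NU Hd Hc; elim/big_rec2: _ => [|i y1 y2 _ IH]; first exact: derive0.
by rewrite addrC (@derive_comb R V K U z y2 (w i) (c i) NU Hd (Hc i)) IH addrC.
Qed.

Lemma hess_formula (V : normedModType R) (G : V -> R) (U : set V) k
    (w : 'I_k -> V) (c : 'I_k -> R) z :
  (forall y, U y -> nbhs y U) ->
  (forall y, U y -> forall e, derivable G y e) ->
  (forall e y, U y -> {for y, continuous ('D_e G)}) ->
  (forall e y, U y -> forall e', derivable ('D_e G) y e') ->
  (forall e e' y, U y -> {for y, continuous ('D_e' ('D_e G))}) ->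
  U z ->
  'D_(\sum_i c i *: w i) ('D_(\sum_i c i *: w i) G) z =
    \sum_j c j * \sum_i c i * 'D_(w i) ('D_(w j) G) z.
Proof.
move=> oU H1 H2 H3 H4 Uz.
set v := \sum_i c i *: w i.
have NE : \forall y \near z, 'D_v G y = \sum_j c j * 'D_(w j) G y.
  have NU := oU z Uz.
  near=> y.
  have Uy : U y by near: y; exact: NU.
  exact: (@derive_sumdir V G U y k w c (oU y Uy) H1 (fun i => H2 (w i) y Uy)).
rewrite (near_eq_derive _ NE).
have -> : (fun y => \sum_j c j * 'D_(w j) G y) = \sum_j (c j \*: 'D_(w j) G).
  by apply: funext => y; rewrite fct_sumE.
rewrite derive_sum; last by move=> j; apply: derivableZ; exact: H3.
apply: eq_bigr => j _; rewrite deriveZ; last exact: H3.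
rewrite (@derive_sumdir V ('D_(w j) G) U z k w c (oU z Uz) (H3 (w j))) //.
by move=> i; exact: H4.
Unshelve. all: by end_near. Qed.

End Aux4.
Section Aux5.
Variable R : realType.

Lemma cont_sum (T : topologicalType) k (F : 'I_k -> T -> R) :
  (forall j, continuous (F j)) -> continuous (fun x => \sum_j F j x).
Proof.
move=> HF; rewrite -(@fct_sumE _ _ _ _ _ F).
elim/big_ind: _ => //.
- move=> x; exact: cvg_cst.
- move=> f g cf cg x; exact: (continuousD (cf x) (cg x)).
Qed.

Lemma sum_bound k (u : 'rV[R]_k) (D : 'I_k -> 'I_k -> R) eta :
  `|u| <= 1 -> (forall i j, `|D i j| <= eta) ->
  `|\sum_j u 0 j * \sum_i u 0 i * D i j| <= eta *+ k *+ k.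
Proof.
move=> Hu HD.
have -> : eta *+ k *+ k = \sum_(j < k) \sum_(i < k) eta.
  by rewrite !sumr_const card_ord.
apply: le_trans (ler_norm_sum _ _ _) _; apply: ler_sum => j _.
rewrite normrM; rewrite -[X in _ <= X]mul1r.
apply: ler_pM => //; first exact: le_trans (@mxentry_le R _ _ u _ _) Hu.
apply: le_trans (ler_norm_sum _ _ _) _; apply: ler_sum => i _.
rewrite normrM -[X in _ <= X]mul1r; apply: ler_pM => //.
exact: le_trans (@mxentry_le R _ _ u _ _) Hu.
Qed.

Lemma unif_pos (V : normedModType R) k (Kf : 'I_k -> 'I_k -> V -> R) z0 :
  (forall i j, {for z0, continuous (Kf i j)}) ->
  (forall v : 'rV[R]_k, v != 0 -> 0 < \sum_j v 0 j * \sum_i v 0 i * Kf i j z0) ->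
  exists2 r : R, 0 < r & forall z, `|z0 - z| < r -> forall v : 'rV[R]_k,
     0 <= \sum_j v 0 j * \sum_i v 0 i * Kf i j z.
Proof.
move=> HK Hpos.
set q := fun z (v : 'rV[R]_k) => \sum_j v 0 j * \sum_i v 0 i * Kf i j z.
have qZ z a v : q z (a *: v) = a ^+ 2 * q z v.
  rewrite /q mulr_sumr; apply: eq_bigr => j _.
  rewrite mxE (eq_bigr (fun i => a * (v 0 i * Kf i j z))); last first.
    by move=> i _; rewrite mxE mulrA.
  rewrite -mulr_sumr; ring.
have q0 z : q z 0 = 0.
  by rewrite /q big1 // => j _; rewrite mxE mul0r.
have unit (v : 'rV[R]_k) : v != 0 -> `| `|v|^-1 *: v | = 1.
  by move=> v0; rewrite normrZ ger0_norm ?invr_ge0 // mulVf // normr_eq0.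
have decomp (v : 'rV[R]_k) : v = `|v| *: (`|v|^-1 *: v).
  case: (eqVneq v 0) => [->|v0]; first by rewrite !scaler0.
  by rewrite scalerA mulfV ?scale1r // normr_eq0.
set S := [set v : 'rV[R]_k | `|v| = 1].
have [S0|S0] := pselect (S !=set0); last first.
  exists 1 => // z _ v.
  have [->|v0] := eqVneq v 0; first by rewrite -/(q z 0) q0.
  by exfalso; apply: S0; exists (`|v|^-1 *: v); exact: unit.
have cS : compact S.
  apply: bounded_closed_compact.
    rewrite /= /bounded_near; near=> M => v /= Sv; rewrite Sv; near: M; exact: nbhs_pinfty_ge.
  have -> : S = (fun v : 'rV[R]_k => `|v|) @^-1` [set x : R | x = 1] by [].
  apply: preimage_closed; last exact: closed_eq.
  move=> x _; exact: norm_continuous.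
have cq : continuous (q z0).
  apply: cont_sum => j; move=> x; apply: continuousM; first exact: coord_continuous.
  apply: cont_sum => i y; apply: continuousM; first exact: coord_continuous.
  exact: cst_continuous.
have [vm vmS vmmin] := EVT_min_rV S0 cS (continuous_subspaceT cq).
have vm0 : vm != 0.
  move: vmS; rewrite inE /S /= => H; apply/eqP => E; move: H; rewrite E normr0.
  by move/eqP; rewrite eq_sym oner_eq0.
set c := q z0 vm.
have c0 : 0 < c := Hpos vm vm0.
set eta := c / ((k * k)%:R + 1).
have eta0 : 0 < eta by rewrite divr_gt0 // ltr_pwDr.
have NK : \forall z \near z0, forall j i, `|Kf i j z0 - Kf i j z| < eta.
  apply: filter_forall => j; apply: filter_forall => i.
  exact: (cvgrPdist_lt _ _).1 (HK i j) eta eta0.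
have [r r0 Hr] := (nbhs_ballP _ _).1 NK.
exists r => // z zr v.
have Bz : forall j i, `|Kf i j z0 - Kf i j z| < eta.
  by apply: Hr; rewrite -ball_normE.
rewrite -/(q z v) (decomp v) qZ; apply: mulr_ge0; first exact: sqr_ge0.
have [->|v0] := eqVneq v 0; first by rewrite normr0 invr0 scale0r q0.
set u := `|v|^-1 *: v.
have uS : u \in S by rewrite inE /S /= unit.
have cu : c <= q z0 u := vmmin u uS.
have E : q z0 u - q z u = \sum_j u 0 j * \sum_i u 0 i * (Kf i j z0 - Kf i j z).
  rewrite /q -sumrB; apply: eq_bigr => j _; rewrite -mulrBr -sumrB.
  by congr (_ * _); apply: eq_bigr => i _; rewrite mulrBr.
have u1 : `|u| <= 1 by rewrite /u unit.
have B := @sum_bound k u (fun i j => Kf i j z0 - Kf i j z) eta u1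
  (fun i j => ltW (Bz j i)).
rewrite -E in B.
have N0 : (0 : R) <= (k * k)%:R by [].
have HN : (k * k)%:R * eta < c.
  rewrite /eta mulrA ltr_pdivrMr ?ltr_pwDr //; nra.
rewrite -mulrnA -mulr_natl in B.
have := ler_normlW B; rewrite -/(q z u); lra.
Unshelve. all: by end_near. Qed.
End Aux5.
Section Aux6.
Variable R : realType.

Lemma rowmx_sum n m (v : 'rV[R]_m) :
  row_mx (0 : 'rV[R]_n) v = \sum_j v 0 j *: row_mx (0 : 'rV[R]_n) 'e_j.
Proof.
rewrite {1}(row_sum_delta v).
elim/big_rec2: _ => [|j y1 y2 _ <-]; first by rewrite row_mx0.
by rewrite scale_row_mx scaler0 add_row_mx addr0.
Qed.

Lemma local_min n m (G : 'rV[R]_(n + m) -> R) (U : set 'rV[R]_(n + m)) (y0 : 'rV[R]_m) :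
  (forall y, U y -> nbhs y U) -> smooth_on U G -> U (row_mx 0 y0) ->
  (forall v : 'rV[R]_m, v != 0 ->
     0 < 'D_v (fun y => 'D_v (fun y' => G (row_mx 0 y')) y) y0) ->
  exists2 r : R, 0 < r & forall p y, `|p| < r -> `|y0 - y| < r ->
     (forall v, 'D_v (fun y' => G (row_mx p y')) y0 = 0) ->
     G (row_mx p y0) <= G (row_mx p y).
Proof.
move=> oU sm Uz0 Hpos.
have s3 := sm 3%N; rewrite /= in s3.
have H1 y (Uy : U y) e : derivable G y e := (s3.2 e).1 y Uy.
have H2 e y (Uy : U y) : {for y, continuous ('D_e G)} := ((s3.2 e).2).1 y Uy.
have H3 e y (Uy : U y) e' : derivable ('D_e G) y e' := ((((s3.2 e).2).2 e').1 y Uy).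
have H4 e e' y (Uy : U y) : {for y, continuous ('D_e' ('D_e G))} :=
  (((((s3.2 e).2).2 e').2).1 y Uy).
set w := fun j : 'I_m => row_mx (0 : 'rV[R]_n) ('e_j : 'rV[R]_m).
set Kf := fun i j : 'I_m => 'D_(w i) ('D_(w j) G).
have HF z (v : 'rV[R]_m) : U z ->
    'D_(row_mx 0 v) ('D_(row_mx 0 v) G) z = \sum_j v 0 j * \sum_i v 0 i * Kf i j z.
  move=> Uz; rewrite (@rowmx_sum n m v).
  exact: (@hess_formula R _ G U m w (fun j => v 0 j) z oU H1 H2 H3 H4 Uz).
set z0 := row_mx (0 : 'rV[R]_n) y0.
have [r1 r10 Hr1] : exists2 r : R, 0 < r & forall z, `|z0 - z| < r -> forall v : 'rV[R]_m,
     0 <= \sum_j v 0 j * \sum_i v 0 i * Kf i j z.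
  apply: unif_pos => [i j|v v0]; first exact: H4.
  rewrite -HF // (@derive_row_mx R n m _ _ _ v).1.
  have -> : (fun y' => 'D_(row_mx 0 v) G (row_mx 0 y')) =
            (fun y => 'D_v (fun y' => G (row_mx 0 y')) y).
    by apply: funext => y'; rewrite (@derive_row_mx R n m _ _ _ v).1.
  exact: Hpos.

have [r2 r20 Hr2] := (nbhs_ballP _ _).1 (oU z0 Uz0).
exists (Num.min r1 r2); first by rewrite lt_min r10 r20.
have Hz z : `|z0 - z| < Num.min r1 r2 -> U z /\
    forall v : 'rV[R]_m, 0 <= 'D_(row_mx 0 v) ('D_(row_mx 0 v) G) z.
  rewrite lt_min => /andP[zr1 zr2].
  have Uz : U z by apply: Hr2; rewrite -ball_normE.
  by split => // v; rewrite HF //; exact: Hr1.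
move=> p y pr yr crit.
set v := y - y0; set vt := row_mx (0 : 'rV[R]_n) v; set zp := row_mx p y0.
have pt t : zp + t *: vt = row_mx p (y0 + t *: v).
  by rewrite /zp /vt scale_row_mx scaler0 add_row_mx addr0.
have ptin t : 0 <= t <= 1 -> `|z0 - (zp + t *: vt)| < Num.min r1 r2.
  move=> /andP[t0 t1]; rewrite pt.
  have -> : z0 - row_mx p (y0 + t *: v) = row_mx (- p) (- (t *: v)).
    by rewrite /z0 opp_row_mx add_row_mx add0r opprD addrA subrr add0r.
  apply: norm_row_mx_lt; first by rewrite normrN.
  rewrite normrN normrZ ger0_norm //; apply: le_lt_trans yr.
  rewrite /v distrC -[X in _ <= X]mul1r; exact: ler_wpM2r.
set psi := fun t : R => 'D_vt G (zp + t *: vt).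
set phi := fun t : R => G (zp + t *: vt).
have dphi t : 0 <= t <= 1 -> derivable phi t 1 /\ derive1 phi t = psi t.
  move=> tI; have [Ut _] := Hz _ (ptin t tI); split.
    by rewrite /phi; apply/(@derive_line R _ G zp vt t).2; exact: H1.
  by rewrite derive1E /phi; exact: (@derive_line R _ G zp vt t).1.
have dpsi t : 0 <= t <= 1 -> derivable psi t 1 /\
    derive1 psi t = 'D_vt ('D_vt G) (zp + t *: vt).
  move=> tI; have [Ut _] := Hz _ (ptin t tI); split.
    by rewrite /psi; apply/(@derive_line R _ ('D_vt G) zp vt t).2; exact: H3.
  by rewrite derive1E /psi; exact: (@derive_line R _ ('D_vt G) zp vt t).1.
have psi0 : psi 0 = 0.
  by rewrite /psi scale0r addr0 /zp /vt (@derive_row_mx R n m G p y0 v).1; exact: crit.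
have oc x : x \in `]0, 1[ -> 0 <= x <= 1.
  by rewrite in_itv /= => /andP[x0 x1]; rewrite !ltW.
have cc x : x \in `[0, 1] -> 0 <= x <= 1 by rewrite in_itv.
have psige t : 0 <= t <= 1 -> 0 <= psi t.
  move=> /andP[t0 t1]; rewrite -psi0.
  have D1 x : x \in `]0, 1[ -> derivable psi x 1 by move=> /oc /dpsi [].
  have D2 x : x \in `]0, 1[ -> 0 <= derive1 psi x.
    move=> /oc xI; rewrite (dpsi x xI).2; exact: (Hz _ (ptin x xI)).2 v.
  have C : {within `[0, 1], continuous psi}.
    apply: continuous_in_subspaceT => x; rewrite inE /= => /cc xI.
    by apply: differentiable_continuous; apply/derivable1_diffP; exact: (dpsi x xI).1.
  exact: (@ger0_derive1_ndecr R psi 0 1 D1 D2 C 0 t (lexx 0) t0 t1).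
have : phi 0 <= phi 1.
  have D1 x : x \in `]0, 1[ -> derivable phi x 1 by move=> /oc /dphi [].
  have D2 x : x \in `]0, 1[ -> 0 <= derive1 phi x.
    by move=> /oc xI; rewrite (dphi x xI).2; exact: psige.
  have C : {within `[0, 1], continuous phi}.
    apply: continuous_in_subspaceT => x; rewrite inE /= => /cc xI.
    by apply: differentiable_continuous; apply/derivable1_diffP; exact: (dphi x xI).1.
  exact: (@ger0_derive1_ndecr R phi 0 1 D1 D2 C 0 1 (lexx 0) ler01 (lexx 1)).
by rewrite /phi scale0r addr0 pt scale1r /v addrC subrK.
Qed.
End Aux6.
Theorem lemma2p12 (R : realType) (M : topologicalType) (m n : nat)
    (A : set (chart R M m)) (C : set M) (f : 'rV[R]_n -> M -> R) (x0 : M) :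
  smooth_manifold A ->
  compact C ->
  smooth_param A f ->
  C x0 ->
  (forall x, C x -> f 0 x0 <= f 0 x) ->
  (forall x, C x -> f 0 x = f 0 x0 -> x = x0) ->
  critical_point A (f 0) x0 ->
  pos_def_hessian A (f 0) x0 ->
  (exists2 zeta : R, 0 < zeta &
     forall p : 'rV[R]_n, `|p| < zeta -> critical_point A (f p) x0) ->
  exists2 eps : R, 0 < eps &
    forall p : 'rV[R]_n, `|p| < eps -> forall x, C x -> f p x0 <= f p x.
Proof.
move=> [hM scM Achart Acover Atrans] cC sf Cx0 gmin guniq crit0 hess [zeta zeta0 crit].
have JC : forall x : M, forall eta : R, 0 < eta ->
    \forall x' \near x & p \near (0 : 'rV[R]_n), `|f 0 x - f p x'| < eta.
  move=> x eta eta0.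
  have [d [Ad dx]] := Acover x.
  have [[odom oimg] fK1 fK2 fcont icont] := Achart d Ad.
  have smd := sf d Ad 0%N; rewrite /= in smd.
  have Ux : ch_img d (rsubmx (row_mx (0 : 'rV[R]_n) (ch_fun d x))) by rewrite row_mxKr; exact: (fK1 x dx).1.
  have H := (cvgrPdist_lt _ _).1 (smd _ Ux) eta eta0.
  have [rho rho0 Hrho] := (nbhs_ballP _ _).1 (H _).
  exists ([set x' | ch_dom d x' /\ `|ch_fun d x - ch_fun d x'| < rho], [set p : 'rV[R]_n | `|p| < rho]).
    split => /=.
      near=> x'; split; first by near: x'; move: odom; rewrite openE; exact.
      near: x'; exact: (cvgrPdist_lt _ _).1 (fcont x dx) rho rho0.
    by apply/nbhs_ballP; exists rho => // q; rewrite -ball_normE /ball_ /= sub0r normrN.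
  move=> [x' p] [/= [dx' Hx'] Hp].
  have := Hrho (row_mx p (ch_fun d x')).
  rewrite /= !row_mxKl !row_mxKr (fK1 x dx).2 (fK1 x' dx').2; apply.
  rewrite -ball_normE /ball_ /= opp_row_mx add_row_mx add0r.
  by apply: norm_row_mx_lt; rewrite ?normrN.
have [c [Ac dx0]] := Acover x0.
have [[odom oimg] fK1 fK2 fcont icont] := Achart c Ac.
set y0 := ch_fun c x0.
have imgy0 : ch_img c y0 := (fK1 x0 dx0).1.
have inv0 : ch_inv c y0 = x0 := (fK1 x0 dx0).2.
set U := [set z : 'rV[R]_(n + m) | ch_img c (rsubmx z)].
set G := fun z : 'rV[R]_(n + m) => f (lsubmx z) (ch_inv c (rsubmx z)).
have oU : forall z, U z -> nbhs z U.
  move=> z Uz; have N : nbhs (rsubmx z) (ch_img c).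
    by move: oimg; rewrite openE; apply.
  exact: (@continuous_rsubmx R 1 n m z _ N).
have smG : smooth_on U G := sf c Ac.
have UG0 : U (row_mx 0 y0) by rewrite /U /= row_mxKr.
have GE p : (fun y' => G (row_mx p y')) = (fun y' => f p (ch_inv c y')).
  by apply: funext => y'; rewrite /G row_mxKl row_mxKr.
have Hpos : forall v : 'rV[R]_m, v != 0 ->
    0 < 'D_v (fun y => 'D_v (fun y' => G (row_mx 0 y')) y) y0.
  by move=> v v0; rewrite GE; exact: hess c Ac dx0 v v0.
have [r r0 Hloc] := @local_min R n m G U y0 oU smG UG0 Hpos.
have LOC : forall p x, `|p| < r -> `|p| < zeta -> ch_dom c x ->
    `|y0 - ch_fun c x| < r -> f p x0 <= f p x.
  move=> p x pr pz dx yr.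
  have := Hloc p (ch_fun c x) pr yr.
  rewrite /G !row_mxKl !row_mxKr inv0 (fK1 x dx).2; apply.
  by move=> v; rewrite GE; exact: crit p pz c Ac dx0 v.
set W := [set x | ch_dom c x /\ `|y0 - ch_fun c x| < r].
have Wx0 : W x0 by split => //; rewrite subrr normr0.
set P := fun (p : 'rV[R]_n) x => W x \/ f p x0 < f p x.
have cover : forall x, C x ->
    \forall x' \near x & p \near (0 : 'rV[R]_n), P p x'.
  move=> x Cx; case: (pselect (W x)) => [[dx yx]|Wx].
    exists ([set x' | ch_dom c x' /\ `|ch_fun c x - ch_fun c x'| < r - `|y0 - ch_fun c x|], setT).
      split => /=; last exact: filterT.
      have e0 : 0 < r - `|y0 - ch_fun c x| by rewrite subr_gt0.
      near=> x'; split; first by near: x'; move: odom; rewrite openE; exact.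
      near: x'; exact: (cvgrPdist_lt _ _).1 (fcont x dx) _ e0.
    move=> [x' p] [/= [dx' Hx'] _]; left; split => //.
    have := ler_distD (ch_fun c x) y0 (ch_fun c x'); lra.
  have xx0 : x != x0 by apply/eqP => E; apply: Wx; rewrite E.
  have gne : f 0 x != f 0 x0 by apply/eqP => /(guniq x Cx) E; move/eqP: xx0.
  have dpos : 0 < (f 0 x - f 0 x0) / 2.
    by rewrite divr_gt0 // subr_gt0 lt_neqAle eq_sym gne gmin.
  have J1 := JC x _ dpos.
  have [[A0 B0] [/= A00 B00] HAB] := JC x0 _ dpos.
  have : \forall x' \near x & p \near (0 : 'rV[R]_n), B0 p.
    by exists (setT, B0) => //=; [split => //; exact: filterT | move=> [? ?] []].
  apply: filterS2 J1 => -[x' p] /= H1 H2; right.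
  have H3 : `|f 0 x0 - f p x0| < (f 0 x - f 0 x0) / 2.
    by apply: (HAB (x0, p)); split => //; exact: nbhs_singleton.
  move: H1 H3; rewrite !ltr_norml; lra.
have NC := (compact_near_coveringP C).1 cC _ _ P _ cover.
have [e1 e10 He1] := (nbhs_ballP _ _).1 (NC _).
exists (Num.min e1 (Num.min r zeta)).
  by rewrite !lt_min e10 r0 zeta0.
move=> p; rewrite !lt_min => /andP[pe1 /andP[pr pz]] x Cx.
have Pp : P p x.
  apply: (He1 p) => //; rewrite -ball_normE /ball_ /= sub0r normrN //.
case: Pp => [[dx yx]|]; first exact: LOC.
exact: ltW.
Unshelve. all: by end_near.
Qed.
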